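(* Let $V$ be a finite ground set partitioned into groups $V_1,\dots,V_m$, let $\alpha$ be a nonnegative integer and $c$ a positive integer, and let $f:2^V\to\mathbb{R}_{\ge0}$ be submodular (not necessarily monotone). Let $OPT$ be an optimal solution of Problem P.2: maximize $f(S)$ over $S\subseteq V$ subject to $|S\cap V_i|-|S\cap V_j|\le\alpha$ for all $i,j\in[m]$ and $|S|\le c$. Assume $\min_{i\in[m]}|OPT\cap V_i|>1$, and let $z=\min_{i\in[m]}\lfloor|OPT\cap V_i|/2\rfloor$. Then the output $A^{\mathsf{final}}$ of the two-phase algorithm described in the context satisfies $$\mathbb{E}[f(A^{\mathsf{final}})]\ge\frac{1/e-o(1)}{8}\cdot f(OPT).$$
   Context: Problem P.2.2 (depending on $z$): maximize $f(S)$ over $S\subseteq V$ subject to $|S\cap V_i|\le z+\alpha$ for all $i$ and $\sum_{i\in[m]}\max\{z,|S\cap V_i|\}\le c$. Its feasible sets form a matroid. Algorithm: Phase 1: compute a random feasible solution $A^{P22}$ of P.2.2 using the randomized algorithm of Feldman, Naor and Schwartz (2011) for (non-monotone) submodular maximization under a matroid constraint, which guarantees $\mathbb{E}[f(A^{P22})]\ge(1/e-o(1))\,f(S^{P22})$ where $S^{P22}$ is an optimal solution of P.2.2. Phase 2: let $L=\{i\in[m]:|A^{P22}\cap V_i|<z\}$; for each $i\in L$ pick arbitrary disjoint $X_i,Y_i\subseteq V_i\setminus A^{P22}$ with $|X_i|=|Y_i|=z-|A^{P22}\cap V_i|$; let $A^1=A^{P22}\cup\bigcup_{i\in L}X_i$,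 $A^2=A^{P22}\cup\bigcup_{i\in L}Y_i$, and output $A^{\mathsf{final}}$, the one of $A^1,A^2$ with larger $f$-value. The expectation is over the randomness of Phase 1. *)

(* Defs.v *)
From HB Require Import structures.
From mathcomp Require Import all_boot all_order all_algebra.
From mathcomp Require Import all_classical all_reals all_analysis.
Set Implicit Arguments. Unset Strict Implicit. Unset Printing Implicit Defensive.
Import Order.TTheory GRing.Theory Num.Theory.
Local Open Scope ring_scope.

Section Defs.
Variables (R : realType) (V : finType) (m : nat) (grp : V -> 'I_m).

Definition part (i : 'I_m) : {set V} := [set v | grp v == i].

Definition submodular (f : {set V} -> R) : Prop :=
  forall A B : {set V}, f (A :|: B) + f (A :&: B) <= f A + f B.

Definition nonneg_fun (f : {set V} -> R) : Prop := forall A, 0 <= f A.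

Definition feasibleP2 (alpha c : nat) (S : {set V}) : Prop :=
  (forall i j : 'I_m, (#|S :&: part i| <= #|S :&: part j| + alpha)%N) /\
  (#|S| <= c)%N.

Definition feasibleP22 (z alpha c : nat) (S : {set V}) : Prop :=
  (forall i : 'I_m, (#|S :&: part i| <= z + alpha)%N) /\
  (\sum_(i < m) maxn z #|S :&: part i| <= c)%N.

Definition is_optimal (feas : {set V} -> Prop) (f : {set V} -> R) (S : {set V}) : Prop :=
  feas S /\ forall T, feas T -> f T <= f S.

(* z = min_i floor(|OPT ∩ V_i| / 2)  (#|V| is a neutral upper bound, m > 0) *)
Definition zOf (OPT : {set V}) : nat :=
  \big[minn/#|V|]_(i < m) (#|OPT :&: part i| %/ 2)%N.

Definition Lset (z : nat) (A : {set V}) : {set 'I_m} :=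
  [set i | (#|A :&: part i| < z)%N].

Definition phase2_ok (z : nat) (A : {set V}) (X Y : 'I_m -> {set V}) : Prop :=
  forall i, i \in Lset z A ->
    [/\ X i \subset part i :\: A, Y i \subset part i :\: A,
        [disjoint X i & Y i],
        #|X i| = (z - #|A :&: part i|)%N & #|Y i| = (z - #|A :&: part i|)%N].

Definition augment (z : nat) (A : {set V}) (X : 'I_m -> {set V}) : {set V} :=
  A :|: \bigcup_(i in Lset z A) X i.

Definition Afinal (f : {set V} -> R) (z : nat) (A : {set V}) (X Y : 'I_m -> {set V}) :
  {set V} :=
  let A1 := augment z A X in let A2 := augment z A Y in
  if f A2 <= f A1 then A1 else A2.

End Defs.

Definition expect (R : realType) (Omega : finType) (p : Omega -> R) (X : Omega -> R) : R :=
  \sum_(w : Omega) p w * X w.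

Definition is_distribution (R : realType) (Omega : finType) (p : Omega -> R) : Prop :=
  (forall w, 0 <= p w) /\ \sum_(w : Omega) p w = 1.

(* Main.v *)
Require Import Defs.
From HB Require Import structures.
From mathcomp Require Import all_boot all_order all_algebra.
From mathcomp Require Import all_classical all_reals all_analysis.
From mathcomp Require Import zify ring lra.
Import Order.TTheory GRing.Theory Num.Theory.
Local Open Scope ring_scope.

Section H.

Variables (V : finType) (m : nat) (grp : V -> 'I_m).

Lemma cardU1I (x : V) (S P : {set V}) : x \notin S ->
  #|(x |: S) :&: P| = ((x \in P) + #|S :&: P|)%N.
Proof.
move=> xS; case: (boolP (x \in P)) => xP.
  have -> : (x |: S) :&: P = x |: (S :&: P).
    by apply/finset.setP=> y; rewrite !inE; case: eqVneq => // ->; rewrite xP.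
  by rewrite cardsU1 inE (negbTE xS).
have -> : (x |: S) :&: P = S :&: P.
  by apply/finset.setP=> y; rewrite !inE; case: eqVneq => [->|] /=; rewrite ?(negbTE xP) ?andbF.

by [].
Qed.

Lemma cap_split (k : nat) (B : {set V}) : exists T : {set V},
  T \subset B /\ forall i, #|T :&: part grp i| = minn #|B :&: part grp i| k.
Proof.
have [n hn] : exists n, #|B| = n by eexists.
elim: n B hn => [|n IH] B hB.
  exists (@finset.set0 V); split; first exact: finset.sub0set.
  move=> i; move/eqP: hB; rewrite cards_eq0 => /eqP ->; by rewrite finset.set0I cards0 min0n.
have : B != @finset.set0 V by rewrite -card_gt0 hB.
case/set0Pn => x xB.
have hB' : #|B :\ x| = n by move: hB; rewrite (cardsD1 x) xB; case.
have [T' [sT' hT']] := IH _ hB'.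
have xT' : x \notin T'.
  apply/negP => /(fintype.subsetP sT'); by rewrite !inE eqxx.
have eB : B = x |: (B :\ x) by rewrite finset.setD1K.
case: (ltnP #|T' :&: part grp (grp x)| k) => hlt.
- exists (x |: T'); split.
    apply/fintype.subsetP => y; rewrite !inE => /orP [/eqP ->//|/(fintype.subsetP sT')].
    by rewrite !inE => /andP [].
  move=> i; rewrite cardU1I // eB cardU1I ?(setD1 _ _) ?inE ?eqxx // hT'.
  case: (eqVneq (grp x) i) => [e|] /=; last by rewrite add0n.
  move: hlt; rewrite hT' -e; lia.
- exists T'; split.
    apply/fintype.subsetP => y /(fintype.subsetP sT'); by rewrite !inE => /andP [].
  move=> i; rewrite eB cardU1I ?inE ?eqxx // hT'.
  case: (eqVneq (grp x) i) => [e|] /=; last by rewrite add0n.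
  move: hlt; rewrite hT' -e; lia.
Qed.

Lemma cardID_sub (B T P : {set V}) : T \subset B ->
  #|(B :\: T) :&: P| = (#|B :&: P| - #|T :&: P|)%N.
Proof.
move=> sTB; have -> : (B :\: T) :&: P = (B :&: P) :\: (T :&: P).
  apply/finset.setP=> y; rewrite !inE; by case: (y \in T); case: (y \in P); rewrite ?andbF.
rewrite cardsDS //; by apply: finset.setSI.
Qed.

Lemma card_sum_part (S : {set V}) : #|S| = (\sum_(i < m) #|S :&: part grp i|)%N.
Proof.
rewrite -sum1_card (partition_big grp predT) //=.
apply: eq_bigr => i _; rewrite -sum1_card; apply: eq_bigl => y.
by rewrite !inE.
Qed.

Lemma bigmin_le (x : nat) (r : seq 'I_m) (F : 'I_m -> nat) j : j \in r ->
  (\big[minn/x]_(i <- r) F i <= F j)%N.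
Proof.
elim: r => [//|a r IH]; rewrite inE big_cons => /orP [/eqP ->|/IH h].
  exact: geq_minl.
exact: leq_trans (geq_minr _ _) h.
Qed.

Lemma bigmin_cases (x : nat) (r : seq 'I_m) (F : 'I_m -> nat) :
  \big[minn/x]_(i <- r) F i = x \/ exists j, \big[minn/x]_(i <- r) F i = F j.
Proof.
elim: r => [|a r IH]; first by left; rewrite big_nil.
rewrite big_cons; case: (leqP (F a) (\big[minn/x]_(i <- r) F i)) => h.
  by right; exists a.
exact: IH.
Qed.

End H.

Lemma subadd (V : finType) (R : realType) (f : {set V} -> R) :
  nonneg_fun f -> submodular f -> forall A B, f (A :|: B) <= f A + f B.
Proof. move=> fnn fsub A B; have := fsub A B; have := fnn (A :&: B); lra. Qed.

Lemma unionD (V : finType) (A B : {set V}) : A \subset B -> B = A :|: (B :\: A).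
Proof.
move=> sAB; apply/finset.setP => x; rewrite !inE.
case: (boolP (x \in A)) => xA /=; last by [].
by rewrite (fintype.subsetP sAB).
Qed.

Theorem theorem4 (R : realType) (V : finType) (m : nat) (grp : V -> 'I_m)
  (alpha c : nat) (f : {set V} -> R) (OPT S22 : {set V})
  (Omega : finType) (p : Omega -> R) (A : Omega -> {set V})
  (X Y : Omega -> 'I_m -> {set V}) (eps : R) :
  (0 < m)%N -> (0 < c)%N ->
  nonneg_fun f -> submodular f ->
  is_optimal (feasibleP2 grp alpha c) f OPT ->
  (forall i : 'I_m, (1 < #|OPT :&: part grp i|)%N) ->
  let z := zOf grp OPT in
  is_optimal (feasibleP22 grp z alpha c) f S22 ->
  is_distribution p ->
  (forall w, feasibleP22 grp z alpha c (A w)) ->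
  expect p (fun w => f (A w)) >= (expR (-1) - eps) * f S22 ->
  (forall w, phase2_ok grp z (A w) (X w) (Y w)) ->
  expect p (fun w => f (Afinal grp f z (A w) (X w) (Y w)))
    >= (expR (-1) - eps) / 8 * f OPT.
Proof.
move=> m0 c0 fnn fsub [[hgap hc] OPTmax] hgt z [S22f S22max] [p0 p1] Af hE Xok.
have hVo : forall i, (#|OPT :&: part grp i| <= #|V|)%N by move=> i; exact: max_card.
have zle : forall i, (z <= #|OPT :&: part grp i| %/ 2)%N.
  by move=> i; rewrite /z /zOf; apply: (@bigmin_le m); exact: mem_index_enum.
have [j zj] : exists j, z = (#|OPT :&: part grp j| %/ 2)%N.
  case: (@bigmin_cases m #|V| (index_enum 'I_m) (fun i => #|OPT :&: part grp i| %/ 2)%N).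
    move=> zV; have := zle (Ordinal m0); have := hVo (Ordinal m0).
    have := hgt (Ordinal m0); rewrite /z /zOf zV; lia.
  by [].
have z1 : (1 <= z)%N by have := hgt j; rewrite zj; lia.
have ole : forall i, (#|OPT :&: part grp i| <= 3 * (z + alpha))%N.
  by move=> i; have := hgap i j; have := hgt j; rewrite zj; lia.
have feasT : forall T : {set V}, T \subset OPT ->
    (forall i, #|T :&: part grp i| <= z + alpha)%N -> feasibleP22 grp z alpha c T.
  move=> T sT hT; split => //; apply: leq_trans hc.
  rewrite (@card_sum_part V m grp OPT); apply: leq_sum => i _.
  rewrite geq_max; apply/andP; split; first by have := zle i; lia.
  by apply: subset_leq_card; apply: finset.setSI.
have [T1 [s1 h1]] := @cap_split V m grp (z + alpha) OPT.
set B2 := OPT :\: T1.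
have [T2 [s2 h2]] := @cap_split V m grp (z + alpha) B2.
set T3 := B2 :\: T2.
have sB2 : B2 \subset OPT by apply/fintype.subsetP => x; rewrite !inE => /andP [].
have sT3 : T3 \subset B2 by apply/fintype.subsetP => x; rewrite !inE => /andP [].
have f1 : f T1 <= f S22.
  apply: S22max; apply: feasT => // i; rewrite h1; exact: geq_minr.
have f2 : f T2 <= f S22.
  apply: S22max; apply: feasT => [|i]; first exact: fintype.subset_trans s2 sB2.
  rewrite h2; exact: geq_minr.
have f3 : f T3 <= f S22.
  apply: S22max; apply: feasT => [|i]; first exact: fintype.subset_trans sT3 sB2.
  rewrite /T3 cardID_sub // h2 /B2 cardID_sub // h1.
  have := ole i; lia.
have e1 : f OPT <= f T1 + f B2 by rewrite {1}(@unionD V _ _ s1); exact: subadd.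
have e2 : f B2 <= f T2 + f T3 by rewrite {1}(@unionD V _ _ s2); exact: subadd.
have fO : f OPT <= 3 * f S22 by lra.
have hw : forall w, f (A w) <= 2 * f (Afinal grp f z (A w) (X w) (Y w)).
  move=> w; rewrite /Afinal.
  set A1 := augment grp z (A w) (X w); set A2 := augment grp z (A w) (Y w).
  have eI : A1 :&: A2 = A w.
    apply/finset.setP => x; rewrite /A1 /A2 /augment !inE.
    case: (boolP (x \in A w)) => //= xA.
    apply/negP => /andP [/bigcupP [i iL xi] /bigcupP [k kL yk]].
    have [sXi _ dXY _ _] := Xok w i iL.
    have [_ sYk _ _ _] := Xok w k kL.
    move: (fintype.subsetP sXi x xi) (fintype.subsetP sYk x yk).
    rewrite !inE => /andP [_ /eqP gi] /andP [_ /eqP gk].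
    move: yk; rewrite -gk gi => yk.
    by rewrite (disjointFr dXY xi) in yk.
  have := fsub A1 A2; rewrite eI; have := fnn (A1 :|: A2).
  move=> H1 H2; case: ifP => H3; first lra.
  move/negbT: H3; rewrite -ltNge => H3; lra.
rewrite /expect in hE *.
set a := expR (-1) - eps in hE *.
set L := \sum_w p w * f (Afinal grp f z (A w) (X w) (Y w)).
have E2 : \sum_w p w * f (A w) <= 2 * L.
  rewrite /L big_distrr /=; apply: ler_sum => w _.
  have := ler_wpM2l (p0 w) (hw w); lra.
have L0 : 0 <= L by apply: sumr_ge0 => w _; apply: mulr_ge0.
have fO0 : 0 <= f OPT := fnn OPT.
case: (leP 0 a) => ha.
  have := ler_wpM2l ha fO; lra.
have : a * f OPT <= 0 by apply: mulr_le0_ge0 => //; lra.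
lra.
Qed.
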